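(* The ring of integers $\mathbb Z$ has strong avoidance.
   Context: All rings are commutative with $1\neq 0$. A ring map $\phi:R\to S$ has avoidance if whenever $I,I_1,\ldots,I_n$ are ideals of $R$ with $I\subseteq\bigcup_{k=1}^n I_k$, then $IS\subseteq I_kS$ for some $k$. A ring $S$ has strong avoidance if every ring map $R\to S$ has avoidance. *)

(* Defs.v *)
From HB Require Import structures.
From mathcomp Require Import all_boot all_order all_algebra.
Set Implicit Arguments. Unset Strict Implicit. Unset Printing Implicit Defensive.
Import GRing.Theory.
Local Open Scope ring_scope.

Definition is_ideal (R : comNzRingType) (I : R -> Prop) : Prop :=
  [/\ I 0,
      (forall x y, I x -> I y -> I (x + y)),
      (forall x, I x -> I (- x)) &
      (forall r x, I x -> I (r * x))].

Definition ext_ideal (R S : comNzRingType) (f : {rmorphism R -> S})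
    (I : R -> Prop) : S -> Prop :=
  fun s => exists (m : nat) (a : 'I_m -> R) (c : 'I_m -> S),
    (forall i, I (a i)) /\ s = \sum_(i < m) c i * f (a i).

Definition has_avoidance (R S : comNzRingType) (f : {rmorphism R -> S}) : Prop :=
  forall (I : R -> Prop) (n : nat) (Is : 'I_n -> R -> Prop),
    is_ideal I -> (forall k, is_ideal (Is k)) ->
    (forall x, I x -> exists k, Is k x) ->
    exists k : 'I_n, forall s, ext_ideal f I s -> ext_ideal f (Is k) s.

Definition strong_avoidance (S : comNzRingType) : Prop :=
  forall (R : comNzRingType) (f : {rmorphism R -> S}), has_avoidance f.

(* Main.v *)
Require Import Defs.
From mathcomp Require Import all_boot all_order all_algebra.
From Stdlib Require Import Classical.
Import Order.TTheory GRing.Theory Num.Theory.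
Local Open Scope ring_scope.

Lemma key (R : comNzRingType) (f : {rmorphism R -> int}) (I : R -> Prop) :
  is_ideal I -> forall N x, I x -> f x != 0 -> (absz (f x) <= N)%N ->
  exists x0, I x0 /\ f x0 != 0 /\ forall y, I y -> (f x0 %| f y)%Z.
Proof.
case=> I0 ID IN IM; elim=> [|N IH] x Ix fx0 hN.
  by move: fx0; rewrite -absz_eq0; move: hN; rewrite leqn0 => ->.
destruct (classic (forall y, I y -> (f x %| f y)%Z)) as [H|H].
  by exists x.
case: (not_all_ex_not _ _ H) => y Hy.
have [Iy ndv] : I y /\ ~ (f x %| f y)%Z.
  split; last by move=> d; apply: Hy.
  by apply: NNPP => h; apply: Hy => hI; case: (h hI).
set q := (f y %/ f x)%Z.
set z := y + - (q%:~R * x).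
have Iz : I z by apply: ID => //; apply: IN; apply: IM.
have fz : f z = (f y %% f x)%Z.
  rewrite /z rmorphD rmorphN rmorphM rmorph_int intz {1}(divz_eq (f y) (f x)).
  by rewrite -/q addrAC subrr add0r.
have fz0 : f z != 0.
  by rewrite fz; apply/eqP => h; apply: ndv; apply/dvdz_mod0P.
apply: (IH z Iz fz0).
have h1 := ltz_mod (f y) fx0.
have h2 := modz_ge0 (f y) fx0.
rewrite fz.
have : (absz (f y %% f x)%Z < absz (f x))%N.
  by rewrite -ltz_nat !abszE (ger0_norm h2).
move=> h; rewrite -ltnS; exact: leq_trans h hN.
Qed.

Theorem mainTheorem18 : strong_avoidance int.
Proof.
move=> R f I n Is HI HIs Hcov.
have HI' := HI; case: HI' => I0 ID IN IM.
destruct (classic (exists x, I x /\ f x != 0)) as [[x [Ix fx]]|H].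
  have [x0 [Ix0 [fx0 Hdv]]] := @key R f I HI _ x Ix fx (leqnn _).
  have [k Hk] := Hcov x0 Ix0.
  exists k => s [m [a [c [Ha ->]]]].
  exists 1%N, (fun _ => x0), (fun _ => \sum_(i < m) c i * (f (a i) %/ f x0)%Z).
  split=> //.
  rewrite big_ord1 mulr_suml; apply: eq_bigr => i _.
  by rewrite -mulrA divzK //; apply: Hdv.
have [k Hk] := Hcov 0 I0.
exists k => s [m [a [c [Ha ->]]]].
exists 0%N, (fun _ => 0), (fun _ => 0); split => //.
rewrite big_ord0 big1 // => i _.
have : f (a i) = 0 by apply: NNPP => h; apply: H; exists (a i); split => //; apply/eqP.
by move=> ->; rewrite mulr0.
Qed.
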